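(* Let $G=(V,E)$ be a connected undirected graph (parallel edges allowed) with reactances $r_e>0$ and admittance matrix $\mathbf{A}$, let $\vec{\theta}\in\mathbb{R}^V$ and $\vec{p}=\mathbf{A}\vec{\theta}$. Let $H=(V_H,E_H)$ be a subgraph of $G$, let $F\subseteq E_H$, let $\mathbf{A}'$ be the admittance matrix of $G'=(V,E\setminus F)$ (assumed connected), and let $\vec{\theta}'\in\mathbb{R}^V$ satisfy $\mathbf{A}'\vec{\theta}'=\vec{p}$. Suppose a data distortion attack: the observed vector $\vec{\theta}^{\star}\in\mathbb{R}^V$ satisfies $\theta^{\star}_v=\theta'_v$ for $v\in V\setminus V_H$ and $\vec{\theta}^{\star}_H=\vec{\theta}'_H+\vec{z}$, where $\vec{z}$ is a random vector in $\mathbb{R}^{V_H}$ whose distribution has no positive probability mass on any proper linear subspace. Then for every $i\in\mathrm{int}(\bar H)$, $\mathbf{A}_i\vec{\theta}^{\star}=p_i$.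
   Context: Admittance matrix: for $u\neq v$, $a_{uv}=-\sum_e 1/r_e$ over edges $e$ joining $u,v$ ($0$ if none), $a_{uu}=-\sum_{w\neq u}a_{uw}$; $\mathbf{A}_i$ is the $i$-th row. $\bar H$ denotes the subgraph of $G$ induced by $V\setminus V_H$; $\vec{\theta}_H$ denotes the restriction of $\vec{\theta}$ to $V_H$. For a subgraph $S$ of $G$ with node set $V_S$, $\mathrm{int}(S)=\{i\in V_S: N(i)\subseteq V_S\}$, where $N(i)$ is the set of neighbors of $i$ in $G$. *)

(* Defs.v *)
From HB Require Import structures.
From mathcomp Require Import all_boot all_order all_algebra.
From mathcomp Require Import all_classical all_reals all_analysis.
Set Implicit Arguments. Unset Strict Implicit. Unset Printing Implicit Defensive.
Import Order.TTheory GRing.Theory Num.Theory.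
Local Open Scope ring_scope.

(* A multigraph on vertices 'I_n with edges 'I_m; edge e joins (ends e).1 and
   (ends e).2 (undirected; parallel edges allowed). *)

Definition joins (n m : nat) (ends : 'I_m -> 'I_n * 'I_n) (e : 'I_m) (u v : 'I_n) : bool :=
  (ends e == (u, v)) || (ends e == (v, u)).

Definition adj_in (n m : nat) (ends : 'I_m -> 'I_n * 'I_n) (S : {set 'I_m}) : rel 'I_n :=
  fun u v => [exists e in S, joins ends e u v].

Definition connected_in (n m : nat) (ends : 'I_m -> 'I_n * 'I_n) (S : {set 'I_m}) : Prop :=
  forall u v : 'I_n, connect (adj_in ends S) u v.

Definition offdiag_adm (R : fieldType) (n m : nat) (ends : 'I_m -> 'I_n * 'I_n)
  (r : 'I_m -> R) (S : {set 'I_m}) (u v : 'I_n) : R :=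
  - \sum_(e in S | joins ends e u v) (r e)^-1.

Definition admittance (R : fieldType) (n m : nat) (ends : 'I_m -> 'I_n * 'I_n)
  (r : 'I_m -> R) (S : {set 'I_m}) : 'M[R]_n :=
  \matrix_(u, v) if u == v then - \sum_(w | w != u) offdiag_adm ends r S u w
                 else offdiag_adm ends r S u v.

Definition neighb (n m : nat) (ends : 'I_m -> 'I_n * 'I_n) (S : {set 'I_m}) (i : 'I_n) : {set 'I_n} :=
  [set j | adj_in ends S i j].

(* int of the subgraph induced by the complement of VH: nodes i outside VH
   all of whose G-neighbours are outside VH. *)
Definition int_compl (n m : nat) (ends : 'I_m -> 'I_n * 'I_n) (S : {set 'I_m}) (VH : {set 'I_n}) : {set 'I_n} :=
  [set i in ~: VH | neighb ends S i \subset ~: VH].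

Definition is_subspace (R : pzRingType) (M : lmodType R) (S : set M) : Prop :=
  S 0 /\ forall (a : R) (x y : M), S x -> S y -> S (a *: x + y).

Definition proper_subspace (R : pzRingType) (M : lmodType R) (S : set M) : Prop :=
  is_subspace S /\ exists x, ~ S x.

(* Main.v *)
Require Import Defs.
From HB Require Import structures.
From mathcomp Require Import all_boot all_order all_algebra.
From mathcomp Require Import all_classical all_reals all_analysis.
Import Order.TTheory GRing.Theory Num.Theory.
Local Open Scope ring_scope.
Local Open Scope classical_set_scope.

Theorem lemma5p1 (R : realType) (n m : nat) (ends : 'I_m -> 'I_n * 'I_n)
  (r : 'I_m -> R) (hr : forall e, 0 < r e)
  (hconn : connected_in ends [set: 'I_m])
  (theta : 'cV[R]_n)
  (VH : {set 'I_n}) (EH F : {set 'I_m})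
  (hH : forall e, e \in EH -> ((ends e).1 \in VH) && ((ends e).2 \in VH))
  (hF : F \subset EH)
  (hconn' : connected_in ends (~: F))
  (theta' : 'cV[R]_n)
  (htheta' : admittance ends r (~: F) *m theta' = admittance ends r [set: 'I_m] *m theta)
  (d : measure_display) (Omega : measurableType d) (P : probability Omega R)
  (z : Omega -> {ffun {v : 'I_n | v \in VH} -> R})
  (hz : forall S : set {ffun {v : 'I_n | v \in VH} -> R},
      proper_subspace S -> P [set w | S (z w)] = 0%E)
  (thstar : Omega -> 'cV[R]_n)
  (hout : forall w v, v \notin VH -> thstar w v 0 = theta' v 0)
  (hin : forall w (v : {v : 'I_n | v \in VH}), thstar w (val v) 0 = theta' (val v) 0 + z w v) :
  forall w, forall i, i \in int_compl ends [set: 'I_m] VH ->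
    (admittance ends r [set: 'I_m] *m thstar w) i 0
    = (admittance ends r [set: 'I_m] *m theta) i 0.
Proof.
move=> w i /setIdP [hiV hsub].
rewrite inE in hiV.
have hadj : forall j, adj_in ends [set: 'I_m] i j -> j \notin VH.
  move=> j hj; have : j \in neighb ends [set: 'I_m] i by rewrite inE.
  by move/(fintype.subsetP hsub); rewrite inE.
have noF : forall e x, joins ends e i x -> e \notin F.
  move=> e x hj; apply/negP => heF.
  have /andP [h1 h2] := hH e (fintype.subsetP hF e heF).
  move: hj; rewrite /joins => /orP [] /eqP he; rewrite he /= in h1 h2.
    by rewrite h1 in hiV.
  by rewrite h2 in hiV.
have hoff : forall x, offdiag_adm ends r [set: 'I_m] i x = offdiag_adm ends r (~: F) i x.
  move=> x; rewrite /offdiag_adm; congr (- _); apply: eq_bigl => e.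
  rewrite !inE /=; case hj: (joins ends e i x); last by rewrite !andbF.
  by rewrite !andbT (noF e x hj).
have hrow : forall j, admittance ends r [set: 'I_m] i j = admittance ends r (~: F) i j.
  move=> j; rewrite !mxE; case: eqP => _; last by apply: hoff.
  by congr (- _); apply: eq_bigr => x _; apply: hoff.
have -> : (admittance ends r [set: 'I_m] *m theta) i 0
   = (admittance ends r (~: F) *m theta') i 0 by rewrite htheta'.
rewrite !mxE; apply: eq_bigr => j _.
rewrite -hrow.
case hj: (j \in VH); last by rewrite hout // hj.
have hij : i != j by apply/eqP => hij; rewrite hij hj in hiV.
have -> : admittance ends r [set: 'I_m] i j = 0.
  rewrite mxE (negbTE hij) /offdiag_adm big1 ?oppr0 // => e /andP [_ he].
  have : adj_in ends [set: 'I_m] i j by apply/existsP; exists e; rewrite inE.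
  by move/hadj; rewrite hj.
by rewrite !mul0r.
Qed.
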